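(* Let $S$ be an irreducible numerical semigroup with Frobenius number $F$, and let $x$ be a minimal generator of $S$ such that: (1) $x<F$; (2) $2x-F\notin S$; (3) $3x\neq 2F$; (4) $4x\neq 3F$. Then $\overline{S}=(S\setminus\{x\})\cup\{F-x\}$ is an irreducible numerical semigroup with Frobenius number $F$.
   Context: A numerical semigroup is a subset $S\subseteq\mathbb{N}$ (with $\mathbb{N}$ the set of nonnegative integers) closed under addition, containing $0$, with $\mathbb{N}\setminus S$ finite. Its Frobenius number $\mathrm{F}(S)$ is the largest integer not in $S$. Every numerical semigroup has a unique minimal system of generators (a finite set $A$ with $S$ equal to the submonoid of $(\mathbb{N},+)$ generated by $A$, minimal with respect to inclusion); its elements are the minimal generators of $S$. A numerical semigroup is irreducible if it cannot be expressed as the intersection of two numerical semigroups properly containing it. *)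

(* Defs.v *)
From Stdlib Require Import Arith List.

Definition is_numerical_semigroup (S : nat -> Prop) : Prop :=
  S 0 /\ (forall a b, S a -> S b -> S (a + b)) /\
  (exists N, forall n, N <= n -> S n).

Definition frobenius (S : nat -> Prop) (F : nat) : Prop :=
  ~ S F /\ forall n, F < n -> S n.

Inductive generated (A : nat -> Prop) : nat -> Prop :=
  | gen_zero : generated A 0
  | gen_add : forall a n, A a -> generated A n -> generated A (a + n).

Definition generating_system (S : nat -> Prop) (A : nat -> Prop) : Prop :=
  (exists l : list nat, forall a, A a <-> In a l) /\
  (forall n, S n <-> generated A n).

Definition minimal_generating_system (S A : nat -> Prop) : Prop :=
  generating_system S A /\
  forall B : nat -> Prop, (forall a, B a -> A a) -> generating_system S B ->
    forall a, A a -> B a.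

(* x is a minimal generator of S: x belongs to the (unique) minimal
   system of generators of S. *)
Definition minimal_generator (S : nat -> Prop) (x : nat) : Prop :=
  exists A, minimal_generating_system S A /\ A x.

Definition irreducible (S : nat -> Prop) : Prop :=
  is_numerical_semigroup S /\
  ~ (exists S1 S2 : nat -> Prop,
        is_numerical_semigroup S1 /\ is_numerical_semigroup S2 /\
        (forall n, S n -> S1 n) /\ (exists n, S1 n /\ ~ S n) /\
        (forall n, S n -> S2 n) /\ (exists n, S2 n /\ ~ S n) /\
        (forall n, S n <-> (S1 n /\ S2 n))).

(* Main.v *)
Require Import Defs.
From Stdlib Require Import Arith List Lia Classical.

Section Aux.
End Aux.

Lemma gen_mono (A B : nat -> Prop) : (forall a, A a -> B a) ->
  forall n, generated A n -> generated B n.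
Proof. intros H n G; induction G; constructor; auto. Qed.

Lemma gen_add2 (B : nat -> Prop) m n : generated B m -> generated B n -> generated B (m + n).
Proof. intros G1 G2; induction G1; simpl; auto. rewrite <- Nat.add_assoc; constructor; auto. Qed.

Lemma mingen (S : nat -> Prop) x : minimal_generator S x ->
  S x /\ x <> 0 /\ forall a b, S a -> S b -> a + b = x -> a = 0 \/ b = 0.
Proof.
  intros [A [[[[l Hl] Hgen] Hmin] Ax]].
  assert (Sx : S x). { apply Hgen. rewrite <- (Nat.add_0_r x). constructor; auto. constructor. }
  split; auto.
  destruct (classic (x <> 0 /\ forall a b, S a -> S b -> a + b = x -> a = 0 \/ b = 0)) as [H|H]; auto.
  exfalso.
  assert (Hc : x = 0 \/ exists a b, S a /\ S b /\ a + b = x /\ a <> 0 /\ b <> 0).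
  { destruct (Nat.eq_dec x 0); auto. right.
    apply NNPP; intro C; apply H; split; auto. intros a b Ha Hb Hab.
    destruct (Nat.eq_dec a 0); auto. destruct (Nat.eq_dec b 0); auto.
    exfalso; apply C; exists a, b; auto. }
  set (B := fun a => A a /\ a <> x).
  assert (Key : forall n m, m <= n -> generated A m -> generated B m).
  { induction n as [|n IHn]; intros m Hm G.
    - replace m with 0 by lia; constructor.
    - induction G as [|a m' Aa G IH']. constructor.
      destruct (Nat.eq_dec a x) as [->|ne].
      + destruct Hc as [e | [a1 [b1 [Ha1 [Hb1 [E [n1 n2]]]]]]].
        * rewrite e; simpl; apply IH'; lia.
        * rewrite <- E. rewrite <- Nat.add_assoc.
          apply gen_add2. apply (IHn a1). lia. apply Hgen; auto.
          apply gen_add2. apply (IHn b1). lia. apply Hgen; auto.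
          apply IH'; lia.
      + constructor. split; auto. apply IH'; lia. }
  assert (GB : generating_system S B).
  { split.
    - exists (filter (fun a => negb (Nat.eqb a x)) l). intro a. rewrite filter_In.
      unfold B. rewrite Hl, Bool.negb_true_iff, Nat.eqb_neq. tauto.
    - intro n; split; intro Hn.
      + apply (Key n); auto. apply Hgen; auto.
      + apply Hgen. apply (gen_mono B A); auto. intros a [Ha _]; auto. }
  destruct (Hmin B (fun a Ha => proj1 Ha) GB x Ax). auto.
Qed.

Lemma irr_max (S : nat -> Prop) F : irreducible S -> frobenius S F ->
  forall T, is_numerical_semigroup T -> (forall n, S n -> T n) -> ~ T F ->
  forall n, T n -> S n.
Proof.
  intros [[S0 [Sadd [N HN]]] Hno] [HnF Hgt] T NT sub TF n Tn.
  destruct (classic (S n)); auto. exfalso.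
  assert (F0 : F <> 0) by (intro e; subst; auto).
  apply Hno. exists T, (fun m => S m \/ m = F).
  split; auto. split.
  { split; [left; auto|]. split.
    - intros a b [Ha| ->] [Hb| ->].
      + left; auto.
      + destruct (Nat.eq_dec a 0). right; lia. left; apply Hgt; lia.
      + destruct (Nat.eq_dec b 0). right; lia. left; apply Hgt; lia.
      + left; apply Hgt; lia.
    - exists N; intros; left; auto. }
  split; auto. split. exists n; auto. split. intros; left; auto. split.
  exists F; split; auto.
  intro m; split. intros; split; auto.
  intros [HT [HS| ->]]; auto. contradiction.
Qed.

Lemma gap_sym (S : nat -> Prop) F : irreducible S -> frobenius S F ->
  forall h, ~ S h -> h < F -> S (F - h) \/ 2 * h = F.
Proof.
  intros Hirr HF.
  pose proof Hirr as [[S0 [Sadd _]] _]. pose proof HF as [HnF Hgt].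
  assert (M : forall k h, F - h = k -> ~ S h -> h < F -> S (F - h) \/ 2 * h = F).
  { intro k; induction k as [k IH] using (well_founded_induction lt_wf).
    intros h Hk Hh Hlt.
    destruct (classic (S (F - h))) as [|HSF]; auto.
    destruct (Nat.eq_dec (2 * h) F); auto. exfalso.
    assert (h0 : h <> 0) by (intro e; subst; auto).
    assert (S1 : F < 2 * h).
    { destruct (le_lt_dec (2*h) F) as [l|l]; auto. exfalso.
      destruct (IH (F - (F - h)) ltac:(lia) (F - h) eq_refl HSF ltac:(lia)) as [A|A].
      - replace (F - (F - h)) with h in A by lia. auto.
      - lia. }
    assert (S2 : forall s, S s -> s <> 0 -> S (h + s)).
    { intros s Hs s0. destruct (classic (S (h + s))) as [|C]; auto. exfalso.
      assert (h + s <= F) by (destruct (le_lt_dec (h+s) F); auto; exfalso; apply C, Hgt; auto).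
      assert (h + s <> F) by (intro e; apply HSF; replace (F - h) with s by lia; auto).
      destruct (IH (F - (h + s)) ltac:(lia) (h + s) eq_refl C ltac:(lia)) as [A|A].
      - apply HSF. replace (F - h) with (F - (h + s) + s) by lia. auto.
      - lia. }
    apply Hh. apply (irr_max S F Hirr HF (fun n => S n \/ n = h)).
    - split; [left; auto|]. split.
      + intros a b [Ha| ->] [Hb| ->].
        * left; auto.
        * destruct (Nat.eq_dec a 0). right; lia. left; rewrite Nat.add_comm; auto.
        * destruct (Nat.eq_dec b 0). right; lia. left; auto.
        * left; apply Hgt; lia.
      + exists (Datatypes.S F); intros; left; apply Hgt; lia.
    - intros; left; auto.
    - intros [A|A]; auto. lia.
    - right; auto. }
  intros h; apply (M (F - h)); auto.
Qed.

Lemma main (S Sbar : nat -> Prop) (F x : nat) :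
  irreducible S -> frobenius S F -> minimal_generator S x ->
  x < F -> ~ (F <= 2 * x /\ S (2 * x - F)) ->
  3 * x <> 2 * F -> 4 * x <> 3 * F ->
  (forall n, Sbar n <-> ((S n /\ n <> x) \/ n = F - x)) ->
  irreducible Sbar /\ frobenius Sbar F.
Proof.
  intros Hirr HF Hmg Hlt H2 H3 H4 HSb.
  pose proof Hirr as [[S0 [Sadd [N HN]]] _]. pose proof HF as [HnF Hgt].
  destruct (mingen S x Hmg) as [Sx [x0 Hdec]].
  assert (GS := gap_sym S F Hirr HF).
  assert (Cmix : forall a, S a -> a <> x -> Sbar (a + (F - x))).
  { intros a Ha ax. apply HSb.
    destruct (Nat.eq_dec a 0). right; lia. left. split.
    - destruct (classic (S (a + (F - x)))) as [|C]; auto. exfalso.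
      destruct (le_lt_dec (a + (F - x)) F) as [l|l]; [|apply C, Hgt; auto].
      assert (a + (F - x) <> F) by lia.
      destruct (GS _ C ltac:(lia)) as [A|A].
      + destruct (Hdec a (x - a)) as [e|e]; auto.
        replace (x - a) with (F - (a + (F - x))) by lia. auto. all: lia.
      + apply H2; split. lia. replace (2 * x - F) with (a + a) by lia. auto.
    - intro e. apply H2; split. lia. replace (2 * x - F) with a by lia. auto. }
  assert (NS : is_numerical_semigroup Sbar).
  { split; [apply HSb; left; split; auto|]. split.
    - intros a b Ha Hb. apply HSb in Ha. apply HSb in Hb.
      destruct Ha as [[Ha ax]| ->]; destruct Hb as [[Hb bx]| ->].
      + apply HSb; left; split; auto. intro e.
        destruct (Hdec a b Ha Hb e); lia.
      + apply Cmix; auto.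
      + rewrite Nat.add_comm; apply Cmix; auto.
      + apply HSb; left; split; [|lia].
        destruct (classic (S (F - x + (F - x)))) as [|C]; auto. exfalso.
        destruct (le_lt_dec (F - x + (F - x)) F) as [l|l]; [|apply C, Hgt; auto].
        destruct (Nat.eq_dec (F - x + (F - x)) F).
        * apply H2; split. lia. replace (2 * x - F) with 0 by lia. auto.
        * destruct (GS _ C ltac:(lia)) as [A|A].
          -- apply H2; split. lia. replace (2 * x - F) with (F - (F - x + (F - x))) by lia. auto.
          -- lia.
    - exists (Datatypes.S F); intros; apply HSb; left; split. apply Hgt; lia. lia. }
  assert (FB : frobenius Sbar F).
  { split.
    - intro A; apply HSb in A. destruct A as [[A _]|A]; auto. lia.
    - intros n Hn; apply HSb; left; split; auto; lia. }
  split; auto. split; auto.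
  assert (Gap : forall n, ~ Sbar n -> n < F -> Sbar (F - n) \/ 2 * n = F).
  { intros n Hn Hl.
    destruct (Nat.eq_dec n x) as [->|nx].
    - left; apply HSb; right; auto.
    - assert (~ S n) by (intro A; apply Hn, HSb; left; auto).
      assert (n <> F - x) by (intro A; apply Hn, HSb; right; auto).
      destruct (GS n H ltac:(lia)) as [A|A]; auto.
      left; apply HSb; left; split; auto; lia. }
  assert (Claim : forall T, is_numerical_semigroup T -> (forall n, Sbar n -> T n) ->
     forall n, T n -> ~ Sbar n -> T F).
  { intros T [_ [Tadd _]] sub n Tn Hn.
    destruct FB as [_ FG].
    destruct (le_lt_dec n F) as [l|l]; [|exfalso; apply Hn, FG; auto].
    destruct (Nat.eq_dec n F) as [->|ne]; auto.
    destruct (Gap n Hn ltac:(lia)) as [A|A].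
    - replace F with (F - n + n) by lia. auto.
    - replace F with (n + n) by lia. auto. }
  intros [S1 [S2 [NS1 [NS2 [sub1 [[n1 [H1 Hn1]] [sub2 [[n2 [H2' Hn2]] Heq]]]]]]]].
  destruct FB as [FnB _]. apply FnB, Heq. split.
  apply (Claim S1 NS1 sub1 n1); auto. apply (Claim S2 NS2 sub2 n2); auto.
Qed.

Theorem proposition5 (S : nat -> Prop) (F x : nat) :
  irreducible S -> frobenius S F -> minimal_generator S x ->
  x < F -> ~ (F <= 2 * x /\ S (2 * x - F)) ->
  3 * x <> 2 * F -> 4 * x <> 3 * F ->
  let Sbar := fun n => (S n /\ n <> x) \/ n = F - x in
  irreducible Sbar /\ frobenius Sbar F.
Proof.
  intros. apply (main S Sbar F x); auto. intro n; unfold Sbar; tauto.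
Qed.
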